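(* Assume $abcd\neq0$. For $n\in\{0,1,\dots,M-1\}$, with $\|\vec\varphi(n)\|^2=|\varphi(n;R)|^2+|\varphi(n;L)|^2$, \[\|\vec\varphi(n)\|^2=\begin{cases}\dfrac{|a|^2+|b|^2{\zeta'_{M-n-1}}^2+|b|^2{\zeta'_{M-n}}^2}{|a|^2+|b|^2{\zeta'_M}^2}, & \omega\notin\partial B,\\[3mm] \dfrac{|a|^2+|b|^2(M-n)^2+|b|^2(M-n-1)^2}{|a|^2+M^2|b|^2}, & \omega\in\partial B.\end{cases}\]
   Context: Setting: $M\ge1$, $C=\begin{bmatrix} a&b\\ c&d\end{bmatrix}$ a $2\times2$ unitary matrix, $\Delta=\det C$; $|L\rangle=(1,0)^\top$, $|R\rangle=(0,1)^\top$; $\Gamma_M=\{0,\dots,M-1\}$. $E_M$ is the linear map on $\ell^2(\Gamma_M;\mathbb{C}^2)$ with $(E_M\varphi)(x)=P\varphi(x+1)+Q\varphi(x-1)$, $\varphi(-1)=\varphi(M)=0$, $P=\begin{bmatrix} a&b\\0&0\end{bmatrix}$, $Q=\begin{bmatrix}0&0\\c&d\end{bmatrix}$. For $\xi\in\mathbb{R}$, $z=e^{-i\xi}$, let $\varphi$ be the unique solution of $(z-E_M)\varphi=\delta_0|R\rangle$, $\varphi(x;L)=\langle L|\varphi(x)\rangle$, $\varphi(x;R)=\langle R|\varphi(x)\rangle$. Fix a square root $\Delta^{1/2}$, set $\omega=\Delta^{-1/2}z$ (on the unit circle), $x(\omega)=\frac{\omega+\omega^{-1}}{2|a|}$, $\zeta'_m=U_{m-1}(x(\omega))$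 with $U_m$ the Chebyshev polynomials of the second kind ($U_{-1}=0$, $U_0=1$, $U_{m+1}(t)=2tU_m(t)-U_{m-1}(t)$), and $\partial B=\{\omega:|x(\omega)|=1\}$. *)

(* Defs.v *)
From HB Require Import structures.
From mathcomp Require Import all_boot all_order all_algebra.
From mathcomp Require Import complex.
From mathcomp Require Import reals trigo.
Set Implicit Arguments. Unset Strict Implicit. Unset Printing Implicit Defensive.
Import Order.TTheory GRing.Theory Num.Theory.
Local Open Scope ring_scope.
Local Open Scope complex_scope.

Section Defs.
Variable R : realType.
Local Notation C := R[i].

Definition adjmx (A : 'M[C]_2) : 'M[C]_2 := (map_mx Num.conj A)^T.
Definition unitary2 (A : 'M[C]_2) : Prop := A *m adjmx A = 1%:M.

Definition ent_a (A : 'M[C]_2) : C := A 0 0.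
Definition ent_b (A : 'M[C]_2) : C := A 0 1.
Definition ent_c (A : 'M[C]_2) : C := A 1 0.
Definition ent_d (A : 'M[C]_2) : C := A 1 1.

Definition Pmx (A : 'M[C]_2) : 'M[C]_2 :=
  \matrix_(i < 2, j < 2) (if i == 0 then A i j else 0).
Definition Qmx (A : 'M[C]_2) : 'M[C]_2 :=
  \matrix_(i < 2, j < 2) (if i == 1 then A i j else 0).

Definition ketL : 'cV[C]_2 := \col_(i < 2) (if i == 0 then 1 else 0).
Definition ketR : 'cV[C]_2 := \col_(i < 2) (if i == 1 then 1 else 0).

(* extension by zero of phi : 'I_M -> C^2 to nat (so phi(M) = 0) *)
Definition extz (M : nat) (phi : 'I_M -> 'cV[C]_2) (x : nat) : 'cV[C]_2 :=
  match ltnP x M with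
  | LtnNotGeq h => phi (Ordinal h)
  | _ => 0
  end.

Definition E_M (A : 'M[C]_2) (M : nat) (phi : 'I_M -> 'cV[C]_2)
  (x : 'I_M) : 'cV[C]_2 :=
  Pmx A *m extz phi x.+1 +
  Qmx A *m (if x == 0%N :> nat then 0 else extz phi x.-1).

Definition delta0R (M : nat) (x : 'I_M) : 'cV[C]_2 :=
  if x == 0%N :> nat then ketR else 0.

Definition solves (A : 'M[C]_2) (M : nat) (z : C)
  (phi : 'I_M -> 'cV[C]_2) : Prop :=
  forall x : 'I_M, z *: phi x - E_M A phi x = delta0R x.

Definition expmi (xi : R) : C := (cos xi) +i* (- sin xi).

Fixpoint chebU (m : nat) (t : C) : C :=
  match m with
  | 0 => 1
  | 1 => 2 * t
  | (m'.+1 as k).+1 => 2 * t * chebU k t - chebU m' t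
  end.

(* zeta'_m = U_{m-1}(t), with U_{-1} = 0 *)
Definition zetap (m : nat) (t : C) : C :=
  if m is m'.+1 then chebU m' t else 0.

Definition xom (a omega : C) : C := (omega + omega^-1) / (2 * `|a|).

Definition sqnorm (v : 'cV[C]_2) : C := `|v 1 0| ^+ 2 + `|v 0 0| ^+ 2.

End Defs.

(* Main.v *)
Require Import Defs.
From HB Require Import structures.
From mathcomp Require Import all_boot all_order all_algebra.
From mathcomp Require Import complex.
From mathcomp Require Import reals trigo.
From mathcomp Require Import ring.
Import Order.TTheory GRing.Theory Num.Theory.
Local Open Scope ring_scope.
Set Implicit Arguments. Unset Strict Implicit.

Section Helpers.
 Variable R : realType.
Implicit Types A : 'M[R[i]]_2.
Local Notation C := R[i].
Lemma l01 : lift ord0 (ord0 : 'I_1) = 1 :> 'I_2. Proof. exact: val_inj. Qed.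
Lemma unit_ent (A : 'M[C]_2) i j : unitary2 A -> A i 0 * (A j 0)^* + A i 1 * (A j 1)^* = (i == j)%:R.
Proof. rewrite /unitary2 => h; have := congr1 (fun M : 'M[C]_2 => M i j) h.
rewrite !mxE !big_ord_recl big_ord0 addr0 /= !mxE l01. done. Qed.
Lemma extz_ord M (phi : 'I_M -> 'cV[C]_2) (x : 'I_M) : extz phi x = phi x.
Proof. rewrite /extz. case: ltnP => h. by congr phi; apply: val_inj. by move: (ltn_ord x); rewrite ltnNge h. Qed.
Lemma extzM M (phi : 'I_M -> 'cV[C]_2) : extz phi M = 0.
Proof. rewrite /extz. case: ltnP => h //. exfalso; move: (h); by rewrite ltnn. Qed.
Lemma eqL A M z (phi : 'I_M -> 'cV[C]_2) x (hx : (x < M)%N) : solves A z phi ->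
  z * (extz phi x) 0 0 = A 0 0 * (extz phi x.+1) 0 0 + A 0 1 * (extz phi x.+1) 1 0.
Proof. move=> h. have := h (Ordinal hx). move/(congr1 (fun v : 'cV[C]_2 => v 0 0)).
rewrite /E_M /delta0R !mxE !big_ord_recl !big_ord0 !addr0 /= !mxE /= l01 -(extz_ord phi (Ordinal hx)) /=.
rewrite !mul0r.
have -> : (if x == 0%N then ketR R else 0) 0 0 = 0 by case: (x==0%N); rewrite !mxE.
rewrite !addr0.
by move/eqP; rewrite subr_eq0 => /eqP.
Qed.
Lemma eqR A M z (phi : 'I_M -> 'cV[C]_2) x (hx : (x < M)%N) : solves A z phi ->
  z * (extz phi x) 1 0 = (if x == 0%N then 1 else
     A 1 0 * (extz phi x.-1) 0 0 + A 1 1 * (extz phi x.-1) 1 0).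
Proof. move=> h. have := h (Ordinal hx). move/(congr1 (fun v : 'cV[C]_2 => v 1 0)).
rewrite /E_M /delta0R !mxE !big_ord_recl !big_ord0 !addr0 /= !mxE /= l01 -(extz_ord phi (Ordinal hx)) /=.
rewrite !mul0r add0r.
case: (x == 0%N); rewrite ?mxE /= ?mulr0 ?addr0 ?subr0 //.
rewrite add0r. by move/eqP; rewrite subr_eq0 => /eqP.
Qed.

Lemma zetaS k (t : C) : zetap k.+2 t = 2 * t * zetap k.+1 t - zetap k t.
Proof. case: k => [|k] /=; last by []. by rewrite mulr1 subr0. Qed.
Lemma zeta_inv k (t : C) :
  zetap k.+1 t ^+ 2 - 2 * t * zetap k.+1 t * zetap k t + zetap k t ^+ 2 = 1.
Proof. elim: k => [|k IH]. by rewrite /= expr1n mulr0 subr0 expr0n addr0.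
rewrite zetaS -[RHS]IH. move: (zetap k.+1 t) (zetap k t) => Z1 Z0. ring. Qed.
Lemma zeta_conj k (t : C) : t^* = t -> (zetap k t)^* = zetap k t.
Proof. move=> ht.
suff : (zetap k t)^* = zetap k t /\ (zetap k.+1 t)^* = zetap k.+1 t by case.
elim: k => [|k [IH0 IH1]]. by rewrite /= rmorph0 rmorph1.
split => //. rewrite zetaS rmorphB !rmorphM /= ht IH0 IH1 rmorph_nat. by []. Qed.
Lemma zeta_one k (t : C) : t ^+ 2 = 1 -> zetap k t = t ^+ k.+1 * k%:R.
Proof. move=> ht.
suff : zetap k t = t ^+ k.+1 * k%:R /\ zetap k.+1 t = t ^+ k.+2 * k.+1%:R by case.
elim: k => [|k [IH0 IH1]]. by rewrite /= mulr0 mulr1 ht.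
split => //. rewrite zetaS IH0 IH1.
apply/eqP; rewrite -subr_eq0; apply/eqP.
transitivity (t ^+ k.+1 * k%:R * (t ^+ 2 - 1)). rewrite !exprS !mulrS. ring.
by rewrite ht subrr mulr0. Qed.

Lemma I1 (a b na s w P Z0 Z1 : C) : a != 0 -> na != 0 -> s != 0 -> w != 0 ->
  s * w * ((a / (na * s)) * P * Z1 * b * na / (a * w)) =
  a * (P * Z0 * b * na / (a * w)) + b * (P * (Z1 - na / w * Z0)).
Proof. move=> h1 h2 h3 h4; field. by rewrite h1 h2 h3 h4. Qed.
Lemma I2 (a b na s w P Z0 Z1 t : C) : a != 0 -> b != 0 -> na != 0 -> s != 0 -> w != 0 ->
  t = (w + w^-1) / (2 * na) ->
  s ^+ 2 * (na ^+ 2 / a) * ((a / (na * s)) * P * ((2 * t * Z1 - Z0) - na / w * Z1)) =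
  s * w * (P * (Z1 - na / w * Z0)) - (- (s ^+ 2 * ((1 - na ^+ 2) / b))) *
   ((a / (na * s)) * P * Z1 * b * na / (a * w)).
Proof. move=> h1 h2 h3 h4 h5 ->; have h6 : (2:C) != 0 by rewrite pnatr_eq0.
field. by rewrite ?h1 ?h2 ?h3 ?h4 ?h5 ?h6. Qed.
Lemma NR (na w t Z0 Z1 : C) : w != 0 -> na != 0 -> t = (w + w^-1) / (2 * na) ->
  Z1 ^+ 2 - 2 * t * Z1 * Z0 + Z0 ^+ 2 = 1 ->
  (Z1 - na / w * Z0) * (Z1 - na * w * Z0) = na ^+ 2 + (1 - na ^+ 2) * Z1 ^+ 2.
Proof. move=> hw hna ht hinv. apply/eqP; rewrite -subr_eq0; apply/eqP.
have h6 : (2:C) != 0 by rewrite pnatr_eq0.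
transitivity (na ^+ 2 * ((Z1 ^+ 2 - 2 * t * Z1 * Z0 + Z0 ^+ 2) - 1)).
  rewrite ht. field. by rewrite ?hw ?hna ?h6.
by rewrite hinv subrr mulr0. Qed.
Lemma det2 A : \det A = A 0 0 * A 1 1 - A 0 1 * A 1 0.
Proof. rewrite (expand_det_row _ 0) !big_ord_recl big_ord0 /cofactor /=.
rewrite !det_mx11 !mxE /= l01.
have -> : lift 1 (ord0 : 'I_1) = 0 :> 'I_2 by exact: val_inj.
by rewrite /= expr0 expr1 !mul1r addr0 mulN1r mulrN.
Qed.
Lemma nz (xi : R) : `|expmi xi| = 1 :> C.
Proof. rewrite /expmi. simpc. by rewrite sqrrN cos2Dsin2 sqrtr1. Qed.
End Helpers.

Theorem mainTheorem6 (R : realType) (M : nat) (A : 'M[R[i]]_2)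
  (sqrtDelta : R[i]) (xi : R) (phi : 'I_M -> 'cV[R[i]]_2) :
  (1 <= M)%N ->
  unitary2 A ->
  ent_a A * ent_b A * ent_c A * ent_d A != 0 ->
  sqrtDelta ^+ 2 = \det A ->
  solves A (expmi xi) phi ->
  let a := ent_a A in
  let b := ent_b A in
  let omega := sqrtDelta^-1 * expmi xi in
  let t := xom a omega in
  forall n : 'I_M,
    (`|t| != 1 ->
      sqnorm (phi n) =
        (`|a| ^+ 2 + `|b| ^+ 2 * (zetap (M - n - 1) t) ^+ 2
                   + `|b| ^+ 2 * (zetap (M - n) t) ^+ 2)
        / (`|a| ^+ 2 + `|b| ^+ 2 * (zetap M t) ^+ 2)) /\
    (`|t| = 1 ->
      sqnorm (phi n) =
        (`|a| ^+ 2 + `|b| ^+ 2 * ((M - n)%:R) ^+ 2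
                   + `|b| ^+ 2 * ((M - n - 1)%:R) ^+ 2)
        / (`|a| ^+ 2 + (M%:R) ^+ 2 * `|b| ^+ 2)).
Proof.
move=> hM hU hnz hs hsol a b omega t n.
pose c := ent_c A. pose d := ent_d A. pose z := expmi xi. pose s := sqrtDelta.
have R1 : a * a^* + b * b^* = 1 by exact: (unit_ent 0 0 hU).
have R2 : a * c^* + b * d^* = 0 by exact: (unit_ent 0 1 hU).
have R3 : c * c^* + d * d^* = 1 by exact: (unit_ent 1 1 hU).
have hdet : \det A = a * d - b * c by exact: det2.
have EL : forall x, (x < M)%N -> z * extz phi x 0 0 = a * extz phi x.+1 0 0 + b * extz phi x.+1 1 0.
  by move=> x hx; exact: (eqL hx hsol).
have ER : forall x, (x < M)%N -> z * extz phi x 1 0 = (if x == 0%N then 1 else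
     c * extz phi x.-1 0 0 + d * extz phi x.-1 1 0).
  by move=> x hx; exact: (eqR hx hsol).
have ht : t = (omega + omega^-1) / (2 * `|a|) by [].
have hz : `|z| = 1 by exact: nz.
have hom : omega = s^-1 * z by [].
move: hnz; rewrite -/c -/d -/a -/b => hnz.
rewrite -/s in hs.
clearbody t omega. clearbody a b c d z s. clear hsol hU.
rewrite hdet in hs. clear hdet.
move: hnz; rewrite !mulf_eq0 !negb_or => /andP [/andP [/andP [ha hb] hc] hd].
have R2' : a^* * c + b^* * d = 0.
  by have := congr1 Num.conj R2; rewrite rmorphD !rmorphM /= !conjCK rmorph0.
set D := a * d - b * c in hs.
have hdD : d = D * a^*.
  apply/eqP; rewrite eq_sym -subr_eq0; apply/eqP.
  transitivity (d * (a * a^* + b * b^* - 1) - b * (a^* * c + b^* * d)); first by rewrite /D; ring.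
  by rewrite R1 R2' subrr !mulr0 subr0.
have hcD : c = - (D * b^*).
  apply/eqP; rewrite -subr_eq0 opprK; apply/eqP.
  transitivity (c * (1 - (a * a^* + b * b^*)) + a * (a^* * c + b^* * d)); first by rewrite /D; ring.
  by rewrite R1 R2' subrr !mulr0 addr0.
have hDD : D * D^* = 1.
  have e1 : d * d^* = D * D^* * (a * a^*) by rewrite hdD rmorphM /= conjCK; ring.
  have e2 : c * c^* = D * D^* * (b * b^*) by rewrite hcD rmorphN rmorphM /= conjCK; ring.
  transitivity (D * D^* * (a * a^* + b * b^*)); first by rewrite R1 mulr1.
  by rewrite mulrDr -e1 -e2 addrC R3.
have hnD : `|D| = 1.
  have : `|D| ^+ 2 == 1 by rewrite normCK hDD.
  by rewrite sqrp_eq1 ?normr_ge0 // => /eqP.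
have hns : `|s| = 1.
  have : `|s| ^+ 2 == 1 by rewrite -normrX hs hnD.
  by rewrite sqrp_eq1 ?normr_ge0 // => /eqP.
have hs0 : s != 0 by rewrite -normr_eq0 hns oner_eq0.
have hw : `|omega| = 1 by rewrite hom normrM normfV hns hz invr1 mul1r.
have hw0 : omega != 0 by rewrite -normr_eq0 hw oner_eq0.
have hz0 : z != 0 by rewrite -normr_eq0 hz oner_eq0.
have hwc : omega^* = omega^-1 by rewrite (invC_norm omega) hw expr1n invr1 mul1r.
have hzw : z = s * omega by rewrite hom mulrA mulfV // mul1r.
have hna0 : `|a| != 0 by rewrite normr_eq0.
have hna2 : `|a| ^+ 2 = a * a^* by exact: normCK.
have hac : a^* = `|a| ^+ 2 / a by rewrite hna2 [a * _]mulrC mulfK.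
have hbb : b * b^* = 1 - `|a| ^+ 2 by rewrite hna2 -R1 [a * a^* + _]addrC addrK.
have hbc : b^* = (1 - `|a| ^+ 2) / b by rewrite -hbb [b * _]mulrC mulfK.
have hdv : d = s ^+ 2 * (`|a| ^+ 2 / a) by rewrite hdD -hs hac.
have hcv : c = - (s ^+ 2 * ((1 - `|a| ^+ 2) / b)) by rewrite hcD -hs hbc.
have htc : t^* = t.
  rewrite ht rmorphM fmorphV rmorphD fmorphV /= hwc invrK rmorphM /= conj_normC rmorph_nat.
  by rewrite addrC.
pose rho := a / (`|a| * s).
pose pL k := rho ^+ k * zetap k t * b * `|a| / (a * omega).
pose pR k := rho ^+ k * (zetap k.+1 t - `|a| / omega * zetap k t).
have hI1 : forall k, z * pL k.+1 = a * pL k + b * pR k.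
  by move=> k; rewrite /pL /pR exprS hzw; exact: I1.
have hI2 : forall k, d * pR k.+1 = z * pR k - c * pL k.+1.
  move=> k; rewrite /pL /pR exprS zetaS hdv hcv hzw. by apply: I2.
pose r := extz phi M.-1 1 0.
have hM1 : M.-1.+1 = M := prednK hM.
have key : forall k, (k < M)%N ->
  extz phi (M.-1 - k) 0 0 = r * pL k /\ extz phi (M.-1 - k) 1 0 = r * pR k.
  elim=> [|k IH] hk.
    rewrite subn0; split; last by rewrite /pR /= mulr0 subr0 !mul1r mulr1.
    have hMl : (M.-1 < M)%N by rewrite ltn_predL.
    have := EL M.-1 hMl. rewrite hM1 extzM !mxE !mulr0 addr0 => h.
    have -> : pL 0 = 0 by rewrite /pL /= mulr0 !mul0r.
    by rewrite mulr0; apply: (mulfI hz0); rewrite mulr0 h.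
  have hk' : (k < M)%N by apply: ltnW.
  case: (IH hk') => IHL IHR.
  have hkM : (k < M.-1)%N by rewrite -ltnS hM1.
  have hx1 : ((M.-1 - k.+1).+1 = M.-1 - k)%N by rewrite subnSK.
  have hxM : (M.-1 - k.+1 < M)%N by rewrite -hM1 ltnS leq_subr.
  have hL : extz phi (M.-1 - k.+1) 0 0 = r * pL k.+1.
    apply: (mulfI hz0). rewrite EL // hx1 IHL IHR.
    transitivity (r * (a * pL k + b * pR k)); first by ring.
    by rewrite -hI1; ring.
  split => //.
  have hx1M : ((M.-1 - k.+1).+1 < M)%N by rewrite hx1 -hM1 ltnS leq_subr.
  have := ER _ hx1M.
  rewrite /= hx1 IHR hL => h.
  apply: (mulfI hd).
  have -> : d * extz phi (M.-1 - k.+1) 1 0 = z * (r * pR k) - c * (r * pL k.+1).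
    by rewrite h [c * _ + _]addrC addrK.
  transitivity (r * (z * pR k - c * pL k.+1)); first by ring.
  by rewrite -hI2; ring.
have hrho : `|rho| = 1.
  by rewrite /rho normrM normfV normrM normr_id hns mulr1 divff.
have hnpR : forall k, `|pR k| ^+ 2 = `|a| ^+ 2 + (1 - `|a| ^+ 2) * zetap k.+1 t ^+ 2.
  move=> k; rewrite /pR normrM normrX hrho expr1n mul1r normCK.
  rewrite rmorphB !rmorphM fmorphV /= -[chebU k t]/(zetap k.+1 t) hwc invrK conj_normC !zeta_conj //.
  apply: NR => //. rewrite -ht. exact: zeta_inv.
have hnb : `|b| ^+ 2 = 1 - `|a| ^+ 2 by rewrite normCK.
have hnpL : forall k, `|pL k| ^+ 2 = (1 - `|a| ^+ 2) * zetap k t ^+ 2.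
  move=> k; rewrite /pL !normrM normfV normrM normrX hrho expr1n mul1r normr_id hw mulr1.
  rewrite mulfK // exprMn hnb mulrC. congr (_ * _).
  by rewrite normCK zeta_conj // expr2.
have hMl : (M.-1 < M)%N by rewrite ltn_predL.
have hr : `|r| ^+ 2 * (`|a| ^+ 2 + (1 - `|a| ^+ 2) * zetap M t ^+ 2) = 1.
  have h0 := ER 0 hM. rewrite /= in h0.
  have [_ hR0] := key _ hMl. rewrite subnn in hR0.
  rewrite hR0 in h0.
  have := congr1 (fun x => `|x| ^+ 2) h0. rewrite /= normrM hz mul1r normrM normr1 expr1n.
  by rewrite exprMn hnpR hM1.
set den := `|a| ^+ 2 + (1 - `|a| ^+ 2) * zetap M t ^+ 2 in hr.
have hden : den != 0.
  by apply/eqP => e; move: hr; rewrite e mulr0 => /eqP; rewrite eq_sym oner_eq0.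
have hr' : `|r| ^+ 2 = den^-1 by apply: (mulIf hden); rewrite hr mulVf.
pose k := (M.-1 - n)%N.
have hnM : (n <= M.-1)%N by rewrite -ltnS hM1.
have hnk : nat_of_ord n = (M.-1 - k)%N by rewrite /k subKn.
have hkM : (k < M)%N by exact: (leq_ltn_trans (leq_subr _ _) hMl).
have hk1 : (M - n - 1 = k)%N by rewrite /k subnAC subn1.
have hk2 : (M - n = k.+1)%N by rewrite /k -subSn // hM1.
have hfull : sqnorm (phi n) =
   (`|a| ^+ 2 + `|b| ^+ 2 * zetap k t ^+ 2 + `|b| ^+ 2 * zetap k.+1 t ^+ 2) / den.
  have [kL kR] := key _ hkM.
  rewrite /sqnorm -(extz_ord phi n) hnk kL kR [`|r * pR k|]normrM [`|r * pL k|]normrM !exprMn hnpR hnpL hr' hnb.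
  rewrite /den. field. by rewrite -/den hden.
rewrite hk1 hk2.
split => [_|h1]; first by rewrite hfull hnb.
have ht2 : t ^+ 2 = 1 by rewrite expr2 -{2}htc -normCK h1 expr1n.
have hsq : forall m, (t ^+ m.+1 * m%:R) ^+ 2 = m%:R ^+ 2.
  by move=> m; rewrite exprMn -exprM mulnC exprM ht2 expr1n mul1r.
rewrite hfull /den -hnb !zeta_one // !hsq (mulrC (M%:R ^+ 2)).
congr (_ / _). ring.
Qed.
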